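(* Let $f\in\mathrm{Rat}_2$. (1) If $f$ has three distinct fixed points, then $\mathrm{Aut}(f)$ acts faithfully on the fixed point set and coincides with the group of all permutations of the three fixed points which preserve multipliers; hence $|\mathrm{Aut}(f)|$ is $1$, $2$ or $6$ according as the three multipliers are pairwise distinct, exactly two are equal, or all three are equal. (2) If $f$ has exactly two distinct fixed points, then $\mathrm{Aut}(f)$ is trivial. (3) If $f$ has exactly one fixed point, then $\mathrm{Aut}(f)$ is cyclic of order two.
   Context: $\mathrm{Rat}_2$ is the space of holomorphic degree-$2$ maps of the Riemann sphere; each $f$ has three fixed points counted with multiplicity, and the multiplier of a fixed point $z_i$ is $f'(z_i)$ (in the coordinate $1/z$ at $\infty$). An automorphism of $f$ is a Möbius transformation $g$ with $g\circ f\circ g^{-1}=f$; $\mathrm{Aut}(f)$ is the group of all automorphisms of $f$. *)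

(* Defs.v *)
From HB Require Import structures.
From mathcomp Require Import all_boot all_order all_algebra all_fingroup.
From mathcomp Require Import reals.
From mathcomp Require Import complex.

Set Implicit Arguments.
Unset Strict Implicit.
Unset Printing Implicit Defensive.

Import Order.TTheory GRing.Theory Num.Theory.
Local Open Scope ring_scope.

(* The Riemann sphere over the complex numbers C = R[i] (R a realType):
   a point is [Some z] (z in C) or [None] (the point at infinity). *)
Definition sphere (R : realType) := option R[i].

(* A degree-2 rational map f = p/q, with p, q coprime and
   max(deg p, deg q) = 2. *)
Definition isRat2 (R : realType) (p q : {poly R[i]}) : bool :=
  coprimep p q && (maxn (size p) (size q) == 3%N).

Definition ratmap (R : realType) (p q : {poly R[i]}) (x : sphere R) : sphere R :=
  match x with
  | Some z => if q.[z] == 0 then None else Some (p.[z] / q.[z])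
  | None => if q`_2 == 0 then None else Some (p`_2 / q`_2)
  end.

Definition is_fixed (R : realType) (p q : {poly R[i]}) (x : sphere R) : Prop :=
  ratmap p q x = x.

(* Reversal of a polynomial of degree <= 2: w^2 p(1/w). *)
Definition rev2 (R : realType) (p : {poly R[i]}) : {poly R[i]} :=
  (p`_2)%:P + p`_1 *: 'X + p`_0 *: 'X^2.

Definition ratderiv (R : realType) (a b : {poly R[i]}) (z : R[i]) : R[i] :=
  (a^`() * b - a * b^`()).[z] / (b.[z]) ^+ 2.

(* The multiplier f'(x), computed in the coordinate 1/z at infinity:
   near infinity, f is conjugated by w = 1/z to w |-> rev2 q / rev2 p. *)
Definition multiplier (R : realType) (p q : {poly R[i]}) (x : sphere R) : R[i] :=
  match x with
  | Some z => ratderiv p q z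
  | None => ratderiv (rev2 q) (rev2 p) 0
  end.

Definition mobfun (R : realType) (a b c d : R[i]) (x : sphere R) : sphere R :=
  match x with
  | Some z => if c * z + d == 0 then None else Some ((a * z + b) / (c * z + d))
  | None => if c == 0 then None else Some (a / c)
  end.

Definition is_mobius (R : realType) (g : sphere R -> sphere R) : Prop :=
  exists a b c d : R[i], a * d - b * c != 0 /\ forall x, g x = mobfun a b c d x.

(* g is an automorphism of f: a Mobius map with g o f o g^-1 = f,
   i.e. g o f = f o g. *)
Definition is_aut (R : realType) (p q : {poly R[i]}) (g : sphere R -> sphere R) : Prop :=
  is_mobius g /\ forall x, g (ratmap p q x) = ratmap p q (g x).

Definition num_fixed (R : realType) (p q : {poly R[i]}) (n : nat) : Prop :=
  exists s : seq (sphere R), uniq s /\ size s = n /\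
    forall x, is_fixed p q x <-> x \in s.

Definition has_card (T : Type) (A : T -> Prop) (n : nat) : Prop :=
  exists e : 'I_n -> T, injective e /\ forall x, A x <-> exists i, x = e i.

Definition i0 : 'I_3 := @Ordinal 3 0 isT.
Definition i1 : 'I_3 := @Ordinal 3 1 isT.
Definition i2 : 'I_3 := @Ordinal 3 2 isT.

(* Main.v *)
Require Import Defs.
From HB Require Import structures.
From mathcomp Require Import all_boot all_order all_algebra all_fingroup.
From mathcomp Require Import reals.
From mathcomp Require Import complex.
From mathcomp Require Import ring.
From Stdlib Require Import FunctionalExtensionality IndefiniteDescription.
Import Order.TTheory GRing.Theory Num.Theory.
Set Implicit Arguments.
Unset Strict Implicit.
Unset Printing Implicit Defensive.
Local Open Scope ring_scope.
Section Base.
Variable R : realType.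
Local Notation C := R[i].
Local Notation sph := (sphere R).
Implicit Types p q : {poly C}.

Definition mkp (c0 c1 c2 : C) : {poly C} := c0%:P + c1 *: 'X + c2 *: 'X^2.

Lemma mkp_coef c0 c1 c2 i : (mkp c0 c1 c2)`_i =
  if i == 0%N then c0 else if i == 1%N then c1 else if i == 2%N then c2 else 0.
Proof.
rewrite /mkp !coefD coefC coefZ coefX coefZ coefXn.
by case: i => [|[|[|i]]] /=; rewrite ?mulr0 ?mulr1 ?addr0 ?add0r.
Qed.

Lemma mkp0 c0 c1 c2 : (mkp c0 c1 c2)`_0 = c0. Proof. by rewrite mkp_coef. Qed.
Lemma mkp1 c0 c1 c2 : (mkp c0 c1 c2)`_1 = c1. Proof. by rewrite mkp_coef. Qed.
Lemma mkp2 c0 c1 c2 : (mkp c0 c1 c2)`_2 = c2. Proof. by rewrite mkp_coef. Qed.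

Lemma size_mkp c0 c1 c2 : (size (mkp c0 c1 c2) <= 3)%N.
Proof.
apply/leq_sizeP => j hj; rewrite mkp_coef.
by case: j hj => [|[|[|j]]].
Qed.

Lemma mkp_eta p : (size p <= 3)%N -> p = mkp p`_0 p`_1 p`_2.
Proof.
move=> hs; apply/polyP => j; rewrite mkp_coef.
case: j => [|[|[|j]]] //=.
by rewrite nth_default // (leq_trans hs).
Qed.

Lemma horner_mkp c0 c1 c2 z : (mkp c0 c1 c2).[z] = c0 + c1 * z + c2 * z ^+ 2.
Proof. by rewrite /mkp !hornerE. Qed.

Lemma deriv_mkp c0 c1 c2 z : (mkp c0 c1 c2)^`().[z] = c1 + 2 * c2 * z.
Proof. rewrite /mkp !derivE !hornerE /=; ring. Qed.

Lemma horner3 p z : (size p <= 3)%N -> p.[z] = p`_0 + p`_1 * z + p`_2 * z ^+ 2.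
Proof. by move=> h; rewrite {1}(mkp_eta h) horner_mkp. Qed.

Lemma deriv3 p z : (size p <= 3)%N -> p^`().[z] = p`_1 + 2 * p`_2 * z.
Proof. by move=> h; rewrite {1}(mkp_eta h) deriv_mkp. Qed.

Lemma poly_pw p : (forall z, p.[z] = 0) -> p = 0.
Proof.
move=> h; apply/eqP; apply/negPn/negP => hp.
suff : (size [seq (i%:R : C) | i <- iota 0 (size p)] < size p)%N.
  by rewrite size_map size_iota ltnn.
apply: max_poly_roots => //.
  by apply/allP => x /mapP [i _ ->]; apply/eqP/h.
rewrite map_inj_uniq ?iota_uniq //.
by move=> i j /eqP; rewrite eqr_nat => /eqP.
Qed.

Lemma poly_pwD p d : d != 0 -> (forall z, d.[z] != 0 -> p.[z] = 0) -> p = 0.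
Proof.
move=> hd h.
have : d * p = 0.
  apply: poly_pw => z; rewrite hornerM.
  by case: (eqVneq d.[z] 0) => [->|/h ->]; rewrite ?mul0r ?mulr0.
by move/eqP; rewrite mulf_eq0 (negbTE hd) /= => /eqP.
Qed.

Lemma coef5 (e0 e1 e2 e3 e4 : C) :
  (forall z, e0 + e1 * z + e2 * z ^+ 2 + e3 * z ^+ 3 + e4 * z ^+ 4 = 0) ->
  [/\ e0 = 0, e1 = 0, e2 = 0, e3 = 0 & e4 = 0].
Proof.
move=> h.
pose P : {poly C} := e0%:P + e1 *: 'X + e2 *: 'X^2 + e3 *: 'X^3 + e4 *: 'X^4.
have hP : P = 0.
  by apply: poly_pw => z; rewrite /P !(hornerD, hornerZ, hornerXn, hornerX, hornerC) h.
have c : forall i, P`_i = 0 by move=> i; rewrite hP coef0.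
have := c 0%N; have := c 1%N; have := c 2%N; have := c 3%N; have := c 4%N.
rewrite /P !coefD !coefZ !coefC !coefX !coefXn /=.
by rewrite !mulr0 !mulr1 !addr0 !add0r => -> -> -> -> ->.
Qed.


Definition vec := (C * C)%type.
Definition nz (u : vec) := (u.1 != 0) || (u.2 != 0).
Definition sc (t : C) (u : vec) : vec := (t * u.1, t * u.2).
Definition cross (u w : vec) := u.1 * w.2 - u.2 * w.1.
Definition lift (x : sph) : vec := match x with Some z => (z, 1) | None => (1, 0) end.
Definition pt (u : vec) : sph := if u.2 == 0 then None else Some (u.1 / u.2).
Definition qf p (u : vec) := p`_0 * u.2 ^+ 2 + p`_1 * u.1 * u.2 + p`_2 * u.1 ^+ 2.
Definition Fv p q (u : vec) : vec := (qf p u, qf q u).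

Lemma pt_lift x : pt (lift x) = x.
Proof. by case: x => [z|]; rewrite /pt /= ?oner_eq0 ?eqxx ?divr1. Qed.

Lemma lift_nz x : nz (lift x).
Proof. by case: x => [z|]; rewrite /nz /= oner_neq0 ?orbT. Qed.

Lemma nz_sc t u : t != 0 -> nz u -> nz (sc t u).
Proof. by move=> ht; rewrite /nz /= !mulf_eq0 (negbTE ht). Qed.

Lemma pt_sc t u : t != 0 -> pt (sc t u) = pt u.
Proof.
move=> ht; rewrite /pt /= mulf_eq0 (negbTE ht) /=.
case: ifP => // h2; congr Some; field; by rewrite ht (negbT h2).
Qed.

Lemma lift_pt u : nz u -> exists2 t, t != 0 & lift (pt u) = sc t u.
Proof.
rewrite /nz /pt; case: u => u1 u2 /=.
case: (eqVneq u2 0) => [->|h2] /=.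
  rewrite orbF => h1; exists u1^-1; first by rewrite invr_eq0.
  by rewrite /sc /= mulVf // mulr0.
move=> _; exists u2^-1; first by rewrite invr_eq0.
by rewrite /sc /= mulVf // mulrC.
Qed.

Lemma cross_pt u w : nz u -> nz w -> (pt u = pt w <-> cross u w = 0).
Proof.
rewrite /nz /pt /cross; case: u => u1 u2; case: w => w1 w2 /= hu hw.
case: (eqVneq u2 0) => [e2|h2]; case: (eqVneq w2 0) => [f2|k2] //=.
- by subst; rewrite !mul0r mulr0 subrr.
- subst; rewrite eqxx orbF in hu; rewrite mul0r subr0; split=> // /eqP.
  by rewrite mulf_eq0 (negbTE hu) (negbTE k2).
- subst; rewrite eqxx orbF in hw; rewrite mulr0 sub0r; split=> // /eqP.
  by rewrite oppr_eq0 mulf_eq0 (negbTE hw) (negbTE h2).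
- split.
    by case=> /eqP; rewrite (eqr_div _ _ h2 k2) => /eqP ->; ring.
  move=> /eqP; rewrite subr_eq0 => /eqP h; congr Some.
  by apply/eqP; rewrite (eqr_div _ _ h2 k2) h mulrC.
Qed.

Lemma Fv_sc p q t u : Fv p q (sc t u) = sc (t ^+ 2) (Fv p q u).
Proof. rewrite /Fv /qf /sc /=; congr pair; ring. Qed.

Lemma rat_pt p q x : (size p <= 3)%N -> (size q <= 3)%N ->
  ratmap p q x = pt (Fv p q (lift x)).
Proof.
move=> hp hq; case: x => [z|] /=.
  rewrite /pt /Fv /qf /= !horner3 //.
  have e : forall r : {poly C}, r`_0 * 1 ^+ 2 + r`_1 * z * 1 + r`_2 * z ^+ 2 =
            r`_0 + r`_1 * z + r`_2 * z ^+ 2 by move=> r; ring.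
  by rewrite !e.
rewrite /pt /Fv /qf /=.
have e : forall r : {poly C}, r`_0 * 0 ^+ 2 + r`_1 * 1 * 0 + r`_2 * 1 ^+ 2 = r`_2
  by move=> r; ring.
by rewrite !e.
Qed.

Definition good p q := [/\ (size p <= 3)%N, (size q <= 3)%N &
  forall u, nz u -> nz (Fv p q u)].

Lemma rat2_good p q : isRat2 p q -> good p q.
Proof.
case/andP=> hc /eqP hm.
have hp : (size p <= 3)%N by rewrite -hm leq_maxl.
have hq : (size q <= 3)%N by rewrite -hm leq_maxr.
split=> // -[x y] /=; rewrite /nz /Fv /qf /=.
case: (eqVneq y 0) => [->|hy] /=.
  rewrite orbF => hx.
  have e : forall r : {poly C}, r`_0 * 0 ^+ 2 + r`_1 * x * 0 + r`_2 * x ^+ 2 = r`_2 * x ^+ 2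
    by move=> r; ring.
  have hx2 : x ^+ 2 != 0 by rewrite expf_neq0.
  rewrite !e -negb_and; apply/negP => /andP [].
  rewrite !mulf_eq0 (negbTE hx) !orbF => h2 k2.
  move: hm; case/orP: (leq_total (size p) (size q)) => hle.
    rewrite (maxn_idPr hle) => hs.
    by move: k2; rewrite -[2%N]/(3.-1)%N -hs -lead_coefE lead_coef_eq0 => /eqP q0;
      move: hs; rewrite q0 size_poly0.
  rewrite (maxn_idPl hle) => hs.
  by move: h2; rewrite -[2%N]/(3.-1)%N -hs -lead_coefE lead_coef_eq0 => /eqP p0;
    move: hs; rewrite p0 size_poly0.
move=> _.
have hy2 : y ^+ 2 != 0 by rewrite expf_neq0.
have e : forall r : {poly C}, (size r <= 3)%N ->
   r`_0 * y ^+ 2 + r`_1 * x * y + r`_2 * x ^+ 2 = y ^+ 2 * r.[x / y].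
  by move=> r hr; rewrite horner3 //; field.
rewrite (e p hp) (e q hq) !mulf_eq0 (negbTE hy) /= -negb_and.
apply/negP => /andP [h1 h2].
by move: (coprimep_root hc h1); rewrite (eqP h2) eqxx.
Qed.

Lemma good_rat2 p q : good p q -> isRat2 p q.
Proof.
case=> hp hq hF; apply/andP; split.
  apply: Pdiv.ClosedField.root_coprimep => z /eqP hz.
  have := hF (z, 1); rewrite /nz /Fv /qf /= oner_neq0 orbT => /(_ isT).
  have e : forall r : {poly C}, (size r <= 3)%N ->
     r`_0 * 1 ^+ 2 + r`_1 * z * 1 + r`_2 * z ^+ 2 = r.[z].
    by move=> r hr; rewrite horner3 //; ring.
  by rewrite (e p hp) (e q hq) hz eqxx.
have := hF (1, 0); rewrite /nz /Fv /qf /= oner_neq0 => /(_ isT).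
have e : forall r : {poly C}, r`_0 * 0 ^+ 2 + r`_1 * 1 * 0 + r`_2 * 1 ^+ 2 = r`_2
  by move=> r; ring.
rewrite !e => h.
have hmx : (maxn (size p) (size q) <= 3)%N by rewrite geq_max hp hq.
rewrite eqn_leq hmx /=.
rewrite leq_max; case/orP: h => h; apply/orP; [left|right];
  rewrite ltnNge; apply/negP => hs; by move: h; rewrite nth_default ?eqxx.
Qed.


Record mob := Mob { ma : C; mb : C; mc : C; md : C }.
Definition mf (m : mob) : sph -> sph := mobfun (ma m) (mb m) (mc m) (md m).
Definition mdet (m : mob) := ma m * md m - mb m * mc m.
Definition Mv (m : mob) (u : vec) : vec :=
  (ma m * u.1 + mb m * u.2, mc m * u.1 + md m * u.2).
Definition mmul (m n : mob) : mob :=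
  Mob (ma m * ma n + mb m * mc n) (ma m * mb n + mb m * md n)
      (mc m * ma n + md m * mc n) (mc m * mb n + md m * md n).
Definition madj (m : mob) : mob := Mob (md m) (- mb m) (- mc m) (ma m).
Definition mid : mob := Mob 1 0 0 1.
Definition msc (k : C) (m : mob) : mob := Mob (k * ma m) (k * mb m) (k * mc m) (k * md m).

Lemma mf_pt m x : mf m x = pt (Mv m (lift x)).
Proof.
case: x => [z|]; rewrite /mf /pt /Mv /=.
  by rewrite !mulr1.
by rewrite !mulr1 !mulr0 !addr0.
Qed.

Lemma Mv_sc m t u : Mv m (sc t u) = sc t (Mv m u).
Proof. rewrite /Mv /sc /=; congr pair; ring. Qed.

Lemma Mv_mul m n u : Mv (mmul m n) u = Mv m (Mv n u).
Proof. rewrite /Mv /mmul /=; congr pair; ring. Qed.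

Lemma Mv_adjl m u : Mv (madj m) (Mv m u) = sc (mdet m) u.
Proof. rewrite /Mv /madj /sc /mdet /=; congr pair; ring. Qed.

Lemma Mv_adjr m u : Mv m (Mv (madj m) u) = sc (mdet m) u.
Proof. rewrite /Mv /madj /sc /mdet /=; congr pair; ring. Qed.

Lemma Mv_msc k m u : Mv (msc k m) u = sc k (Mv m u).
Proof. rewrite /Mv /msc /sc /=; congr pair; ring. Qed.

Lemma Mv_id u : Mv mid u = u.
Proof. by case: u => a b; rewrite /Mv /=; congr pair; ring. Qed.

Lemma mdet_mul m n : mdet (mmul m n) = mdet m * mdet n.
Proof. rewrite /mdet /mmul /=; ring. Qed.

Lemma mdet_adj m : mdet (madj m) = mdet m.
Proof. rewrite /mdet /madj /=; ring. Qed.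

Lemma mdet_msc k m : mdet (msc k m) = k ^+ 2 * mdet m.
Proof. rewrite /mdet /msc /=; ring. Qed.

Lemma mdet_id : mdet mid = 1.
Proof. rewrite /mdet /=; ring. Qed.

Lemma nz_eq0 u : ~~ nz u -> u = (0, 0).
Proof.
by case: u => a b; rewrite /nz /= negb_or !negbK => /andP [/eqP -> /eqP ->].
Qed.

Lemma Mv_nz m u : mdet m != 0 -> nz u -> nz (Mv m u).
Proof.
move=> hd hu; apply/negP => /negP /nz_eq0 h.
have := Mv_adjl m u; rewrite h /Mv /sc /= !mulr0 !addr0.
clear h; case: u hu => a b; rewrite /nz /= => hu [/esym/eqP ha /esym/eqP hb].
move: ha hb; rewrite !mulf_eq0 (negbTE hd) /= => ha hb.
by move: hu; rewrite ha hb.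
Qed.

Lemma mf_comp m n x : mdet n != 0 -> mf m (mf n x) = mf (mmul m n) x.
Proof.
move=> hn; rewrite !mf_pt.
have [t ht ->] := lift_pt (Mv_nz hn (lift_nz x)).
by rewrite Mv_sc pt_sc // Mv_mul.
Qed.

Lemma mf_msc k m x : k != 0 -> mf (msc k m) x = mf m x.
Proof. by move=> hk; rewrite !mf_pt Mv_msc pt_sc. Qed.

Lemma mf_id x : mf mid x = x.
Proof. by rewrite mf_pt Mv_id pt_lift. Qed.

Lemma mf_adjK m x : mdet m != 0 -> mf (madj m) (mf m x) = x.
Proof.
move=> hd; rewrite mf_comp // mf_pt.
have -> : Mv (mmul (madj m) m) (lift x) = sc (mdet m) (lift x) by rewrite Mv_mul Mv_adjl.
by rewrite pt_sc // pt_lift.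
Qed.

Lemma mf_Kadj m x : mdet m != 0 -> mf m (mf (madj m) x) = x.
Proof.
move=> hd; rewrite mf_comp ?mdet_adj // mf_pt.
have -> : Mv (mmul m (madj m)) (lift x) = sc (mdet m) (lift x) by rewrite Mv_mul Mv_adjr.
by rewrite pt_sc // pt_lift.
Qed.

Lemma mf_inj m : mdet m != 0 -> injective (mf m).
Proof. by move=> hd x y h; rewrite -(mf_adjK x hd) h mf_adjK. Qed.

Lemma is_mobiusP (g : sph -> sph) : is_mobius g <-> exists2 m, mdet m != 0 & g =1 mf m.
Proof.
split.
  by case=> a [b [c [d [hd hg]]]]; exists (Mob a b c d).
by case=> -[a b c d] hd hg; exists a, b, c, d.
Qed.


Definition s0 (m : mob) r := ma m ^+ 2 * r`_0 - ma m * mb m * r`_1 + mb m ^+ 2 * r`_2.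
Definition s1 (m : mob) r := - (2 * ma m * mc m * r`_0) + (ma m * md m + mb m * mc m) * r`_1
   - 2 * mb m * md m * r`_2.
Definition s2 (m : mob) r := mc m ^+ 2 * r`_0 - mc m * md m * r`_1 + md m ^+ 2 * r`_2.
Definition pc m p q := mkp (ma m * s0 m p + mb m * s0 m q) (ma m * s1 m p + mb m * s1 m q)
   (ma m * s2 m p + mb m * s2 m q).
Definition qc m p q := mkp (mc m * s0 m p + md m * s0 m q) (mc m * s1 m p + md m * s1 m q)
   (mc m * s2 m p + md m * s2 m q).

Lemma Fv_conj m p q u : Fv (pc m p q) (qc m p q) u = Mv m (Fv p q (Mv (madj m) u)).
Proof.
rewrite /Fv /qf /pc /qc /Mv /madj /s0 /s1 /s2 !mkp0 !mkp1 !mkp2 /=.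
congr pair; ring.
Qed.

Lemma rat_pt_v p q u : good p q -> nz u -> ratmap p q (pt u) = pt (Fv p q u).
Proof.
case=> hp hq _ hu; rewrite rat_pt //.
have [t ht ->] := lift_pt hu.
by rewrite Fv_sc pt_sc // expf_neq0.
Qed.

Lemma mf_pt_v m u : mdet m != 0 -> nz u -> mf m (pt u) = pt (Mv m u).
Proof.
move=> hd hu; rewrite mf_pt.
have [t ht ->] := lift_pt hu.
by rewrite Mv_sc pt_sc.
Qed.

Lemma good_Fv p q u : good p q -> nz u -> nz (Fv p q u).
Proof. by case=> _ _; apply. Qed.

Lemma comm_vec m p q p' q' k : good p q -> good p' q' -> mdet m != 0 -> k != 0 ->
  (forall u, Fv p' q' (Mv m u) = sc k (Mv m (Fv p q u))) ->
  forall x, mf m (ratmap p q x) = ratmap p' q' (mf m x).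
Proof.
move=> hg hg' hd hk hF x.
rewrite -{1 2}(pt_lift x) rat_pt_v // ?lift_nz // mf_pt_v ?good_Fv ?lift_nz //.
rewrite mf_pt_v ?lift_nz // rat_pt_v ?Mv_nz ?lift_nz // hF pt_sc //.
Qed.

Lemma comm_cross m p q p' q' : good p q -> good p' q' -> mdet m != 0 ->
  (forall x, mf m (ratmap p q x) = ratmap p' q' (mf m x)) ->
  forall u, cross (Mv m (Fv p q u)) (Fv p' q' (Mv m u)) = 0.
Proof.
move=> hg hg' hd hc u.
case: (boolP (nz u)) => hu; last first.
  rewrite (nz_eq0 hu) /cross /Mv /Fv /qf /=; ring.
apply/cross_pt.
- by apply: Mv_nz => //; apply: good_Fv.
- by apply: good_Fv => //; apply: Mv_nz.
have := hc (pt u).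
by rewrite rat_pt_v // mf_pt_v ?good_Fv // mf_pt_v // rat_pt_v // Mv_nz.
Qed.

Lemma conj_good m p q : good p q -> mdet m != 0 -> good (pc m p q) (qc m p q).
Proof.
move=> hg hd; split; rewrite ?size_mkp // => u hu.
rewrite Fv_conj; apply: Mv_nz => //; apply: good_Fv => //.
by apply: Mv_nz => //; rewrite mdet_adj.
Qed.

Lemma conj_comm m p q : good p q -> mdet m != 0 ->
  forall x, mf m (ratmap p q x) = ratmap (pc m p q) (qc m p q) (mf m x).
Proof.
move=> hg hd; apply: (comm_vec (k := mdet m ^+ 2)) => //.
- exact: conj_good.
- by rewrite expf_neq0.
by move=> u; rewrite Fv_conj Mv_adjl Fv_sc Mv_sc.
Qed.


Lemma qf_z1 p z : (size p <= 3)%N -> qf p (z, 1) = p.[z].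
Proof. by move=> h; rewrite /qf horner3 //=; ring. Qed.

Lemma Fv_10 p q : Fv p q (1, 0) = (p`_2, q`_2).
Proof. rewrite /Fv /qf /=; congr pair; ring. Qed.

Lemma good_p0 p q : good p q -> p != 0.
Proof.
move=> hg; apply/negP => /eqP hp0.
have /andP [hc _] := good_rat2 hg.
move: hc; rewrite hp0 coprime0p -size_poly_eq1 => /eqP hs.
have := good_Fv hg (u := (1, 0)); rewrite Fv_10 /nz /= oner_neq0 /= => /(_ isT).
by rewrite hp0 coef0 (nth_default _ (_ : size q <= 2)%N) ?hs // eqxx.
Qed.

Lemma good_q0 p q : good p q -> q != 0.
Proof.
move=> hg; apply/negP => /eqP hq0.
have /andP [hc _] := good_rat2 hg.
move: hc; rewrite hq0 coprimep0 -size_poly_eq1 => /eqP hs.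
have := good_Fv hg (u := (1, 0)); rewrite Fv_10 /nz /= oner_neq0 /= => /(_ isT).
by rewrite hq0 coef0 (nth_default _ (_ : size p <= 2)%N) ?hs // eqxx.
Qed.

Lemma same_map p q p' q' : good p q -> good p' q' ->
  (forall x, ratmap p q x = ratmap p' q' x) ->
  exists2 k, k != 0 & p' = k *: p /\ q' = k *: q.
Proof.
move=> hg hg' hx.
have hmid : mdet mid != 0 by rewrite mdet_id oner_neq0.
have hc := comm_cross hg hg' hmid (fun x => etrans (mf_id _) (etrans (hx x) (congr1 _ (esym (mf_id x))))).
have [hp hq _] := hg; have [hp' hq' _] := hg'.
have e : p * q' = q * p'.
  apply/eqP; rewrite -subr_eq0; apply/eqP/poly_pw => z.
  have := hc (z, 1); rewrite !Mv_id /cross /Fv /= !qf_z1 //.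
  by rewrite hornerD hornerN !hornerM.
have /andP [cp _] := good_rat2 hg.
have /andP [cp' _] := good_rat2 hg'.
have hpd : p %| p' by rewrite -(Gauss_dvdpr _ cp) -e dvdp_mulr.
have [r hr] := dvdpP _ _ hpd.
have hp0 := good_p0 hg.
have hq'r : q' = r * q.
  apply: (mulfI hp0); rewrite e hr; ring.
have : r %= 1.
  by move/coprimepP: cp'; apply; rewrite ?hr ?hq'r dvdp_mulr.
rewrite -size_poly_eq1 => /size_poly1P [c hc0 hrc].
exists c => //; split; by rewrite ?hr ?hq'r hrc mul_polyC.
Qed.

Definition ddet p q (u : vec) :=
  (p`_1 * u.2 + 2 * p`_2 * u.1) * (2 * q`_0 * u.2 + q`_1 * u.1)
  - (2 * p`_0 * u.2 + p`_1 * u.1) * (q`_1 * u.2 + 2 * q`_2 * u.1).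
Definition mrel p q (u : vec) (l mu : C) :=
  [/\ Fv p q u = sc l u, l != 0 & 2 * l ^+ 2 * mu = ddet p q u].

Lemma mult_mrel p q x : good p q -> is_fixed p q x ->
  exists l, mrel p q (lift x) l (multiplier p q x).
Proof.
move=> hg; have [hp hq _] := hg; rewrite /is_fixed.
case: x => [z|] /=.
  case: ifP => // /negbT hqz [hpz].
  have e1 : p.[z] = z * q.[z] by rewrite -{2}hpz divfK.
  exists q.[z]; split => //.
    by rewrite /Fv /sc !qf_z1 //= mulr1 e1 mulrC.
  rewrite /ratderiv hornerD hornerN !hornerM !deriv3 //.
  move: hpz hqz; rewrite !horner3 // => hpz hqz.
  rewrite /ddet /=; field; exact: hqz.
case: ifP => // /eqP hq2 _.
have hp2 : p`_2 != 0.
  have := good_Fv hg (u := (1, 0)); rewrite Fv_10 /nz /= oner_neq0 /= => /(_ isT).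
  by rewrite hq2 eqxx orbF.
exists p`_2; split => //.
  by rewrite Fv_10 /sc /= hq2 mulr1 mulr0.
rewrite /ratderiv /rev2 hornerD hornerN !hornerM.
rewrite -[_%:P + _ *: 'X + _ *: 'X^2]/(mkp _ _ _) !deriv_mkp !horner_mkp.
rewrite /ddet /= hq2; field; exact: hp2.
Qed.


Lemma mrel_sc p q u l mu t : mrel p q u l mu -> t != 0 -> mrel p q (sc t u) (t * l) mu.
Proof.
case=> hF hl he ht; split.
- by rewrite Fv_sc hF /sc /=; congr pair; ring.
- by rewrite mulf_neq0.
- have -> : ddet p q (sc t u) = t ^+ 2 * ddet p q u by rewrite /ddet /sc /=; ring.
  by rewrite -he; ring.
Qed.

Lemma mrel_Z p q u l mu k : mrel p q u l mu -> k != 0 -> mrel (k *: p) (k *: q) u (k * l) mu.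
Proof.
case=> hF hl he hk; split.
- have -> : Fv (k *: p) (k *: q) u = sc k (Fv p q u).
    by rewrite /Fv /qf /sc !coefZ /=; congr pair; ring.
  by rewrite hF /sc /=; congr pair; ring.
- by rewrite mulf_neq0.
- have -> : ddet (k *: p) (k *: q) u = k ^+ 2 * ddet p q u by rewrite /ddet !coefZ; ring.
  by rewrite -he; ring.
Qed.

Lemma ddet_conj m p q u : ddet (pc m p q) (qc m p q) (Mv m u) = mdet m ^+ 4 * ddet p q u.
Proof.
rewrite /ddet /pc /qc /Mv /mdet /s0 /s1 /s2 !mkp0 !mkp1 !mkp2 /=; ring.
Qed.


Lemma mrel_conj m p q u l mu : mrel p q u l mu -> mdet m != 0 ->
  mrel (pc m p q) (qc m p q) (Mv m u) (mdet m ^+ 2 * l) mu.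
Proof.
case=> hF hl he hd; split.
- by rewrite Fv_conj Mv_adjl Fv_sc hF !Mv_sc /sc /=; congr pair; ring.
- by rewrite mulf_neq0 // expf_neq0.
- by rewrite ddet_conj -he; ring.
Qed.

Lemma mrel_uniq p q u l mu l' mu' : nz u -> mrel p q u l mu -> mrel p q u l' mu' -> mu = mu'.
Proof.
move=> hu [hF hl he] [hF' hl' he'].
have hll : l = l'.
  move: hF'; rewrite hF /sc; case: u hu {hF he he'} => a b /= hu [h1 h2].
  case/orP: hu => h.
    by apply: (mulIf h).
  by apply: (mulIf h).
subst l'.
have h2 : 2 * l ^+ 2 != 0.
  by rewrite mulf_neq0 ?expf_neq0 // pnatr_eq0.
by apply: (mulfI h2); rewrite he he'.
Qed.

(* chain rule: conjugation preserves multipliers *)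
Lemma cr m p q p' q' x : good p q -> good p' q' -> mdet m != 0 ->
  (forall y, mf m (ratmap p q y) = ratmap p' q' (mf m y)) ->
  is_fixed p q x -> multiplier p' q' (mf m x) = multiplier p q x.
Proof.
move=> hg hg' hd hc hx.
have hgc := conj_good hg hd.
have hsame : forall y, ratmap (pc m p q) (qc m p q) y = ratmap p' q' y.
  move=> y; rewrite -(mf_Kadj y hd) -conj_comm // hc //.
have [k hk [ep eq]] := same_map hgc hg' hsame.
have hfx : is_fixed p' q' (mf m x) by rewrite /is_fixed -hc hx.
have [l hl] := mult_mrel hg hx.
have [l' hl'] := mult_mrel hg' hfx.
have h1 := mrel_Z (mrel_conj hl hd) hk.
rewrite -ep -eq in h1.
have [t ht elift] : exists2 t, t != 0 & lift (mf m x) = sc t (Mv m (lift x)).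
  by rewrite mf_pt; apply: lift_pt; apply: Mv_nz => //; exact: lift_nz.
have h2 := mrel_sc h1 ht; rewrite -elift in h2.
by apply: (mrel_uniq (lift_nz _) hl' h2).
Qed.


Lemma pt_eq_lift u x : nz u -> cross u (lift x) = 0 -> pt u = x.
Proof. by move=> hu hc; rewrite -(pt_lift x); apply/cross_pt => //; exact: lift_nz. Qed.

Lemma lift_cross x y : x != y -> cross (lift x) (lift y) != 0.
Proof.
move=> hxy; apply/negP => /eqP h.
have := (cross_pt (lift_nz x) (lift_nz y)).2 h.
by rewrite !pt_lift => e; rewrite e eqxx in hxy.
Qed.

Lemma mf_fixed_cross m x : mdet m != 0 -> mf m x = x -> cross (Mv m (lift x)) (lift x) = 0.
Proof.
move=> hd h; apply/cross_pt; rewrite ?lift_nz ?Mv_nz ?lift_nz //.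
by rewrite pt_lift -mf_pt.
Qed.

Definition N3 (v0 v1 v2 : vec) : mob :=
  Mob (- (cross v1 v2 * v0.2)) (cross v1 v2 * v0.1) (- (cross v0 v2 * v1.2)) (cross v0 v2 * v1.1).

Lemma mdet_N3 v0 v1 v2 : mdet (N3 v0 v1 v2) = cross v1 v2 * cross v0 v2 * cross v0 v1.
Proof. rewrite /mdet /N3 /cross /=; ring. Qed.

Lemma N3_spec x0 x1 x2 : x0 != x1 -> x0 != x2 -> x1 != x2 ->
  let n := N3 (lift x0) (lift x1) (lift x2) in
  [/\ mdet n != 0, mf n x0 = Some 0, mf n x1 = None & mf n x2 = Some 1].
Proof.
move=> h01 h02 h12 n.
have hd : mdet n != 0 by rewrite mdet_N3 !mulf_neq0 // lift_cross.
split => //; rewrite mf_pt; apply: pt_eq_lift; rewrite ?Mv_nz ?lift_nz //;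
  rewrite /Mv /n /N3 /cross /=; ring.
Qed.

Definition N2 (v0 v1 : vec) : mob := Mob (- v0.2) v0.1 (- v1.2) v1.1.

Lemma N2_spec x0 x1 : x0 != x1 ->
  let n := N2 (lift x0) (lift x1) in
  [/\ mdet n != 0, mf n x0 = Some 0 & mf n x1 = None].
Proof.
move=> h01 n.
have hd : mdet n != 0.
  have -> : mdet n = cross (lift x0) (lift x1) by rewrite /mdet /n /N2 /cross /=; ring.
  exact: lift_cross.
split => //; rewrite mf_pt; apply: pt_eq_lift; rewrite ?Mv_nz ?lift_nz //;
  rewrite /cross /Mv /n /N2 /=; ring.
Qed.

Lemma Q3 (A B Cc : C) (v0 v1 v2 : vec) :
  cross v0 v1 != 0 -> cross v0 v2 != 0 -> cross v1 v2 != 0 ->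
  A * v0.1 ^+ 2 + B * v0.1 * v0.2 + Cc * v0.2 ^+ 2 = 0 ->
  A * v1.1 ^+ 2 + B * v1.1 * v1.2 + Cc * v1.2 ^+ 2 = 0 ->
  A * v2.1 ^+ 2 + B * v2.1 * v2.2 + Cc * v2.2 ^+ 2 = 0 ->
  [/\ A = 0, B = 0 & Cc = 0].
Proof.
move=> h01 h02 h12 E0 E1 E2.
have hD : cross v0 v1 * cross v0 v2 * cross v1 v2 != 0 by rewrite !mulf_neq0.
case: v0 v1 v2 h01 h02 h12 E0 E1 E2 hD => x0 y0 [x1 y1] [x2 y2];
  rewrite /cross /= => h01 h02 h12 E0 E1 E2 hD.
split.
- apply: (mulIf hD); rewrite mul0r.
  have -> : A * ((x0 * y1 - y0 * x1) * (x0 * y2 - y0 * x2) * (x1 * y2 - y1 * x2)) =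
    y1 * y2 * (x1 * y2 - y1 * x2) * (A * x0 ^+ 2 + B * x0 * y0 + Cc * y0 ^+ 2)
    - y0 * y2 * (x0 * y2 - y0 * x2) * (A * x1 ^+ 2 + B * x1 * y1 + Cc * y1 ^+ 2)
    + y0 * y1 * (x0 * y1 - y0 * x1) * (A * x2 ^+ 2 + B * x2 * y2 + Cc * y2 ^+ 2) by ring.
  by rewrite E0 E1 E2; ring.
- apply: (mulIf hD); rewrite mul0r.
  have -> : B * ((x0 * y1 - y0 * x1) * (x0 * y2 - y0 * x2) * (x1 * y2 - y1 * x2)) =
    - ((x1 * y2 - y1 * x2) * (x1 * y2 + x2 * y1) * (A * x0 ^+ 2 + B * x0 * y0 + Cc * y0 ^+ 2))
    + (x0 * y2 - y0 * x2) * (x0 * y2 + x2 * y0) * (A * x1 ^+ 2 + B * x1 * y1 + Cc * y1 ^+ 2)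
    - (x0 * y1 - y0 * x1) * (x0 * y1 + x1 * y0) * (A * x2 ^+ 2 + B * x2 * y2 + Cc * y2 ^+ 2) by ring.
  by rewrite E0 E1 E2; ring.
- apply: (mulIf hD); rewrite mul0r.
  have -> : Cc * ((x0 * y1 - y0 * x1) * (x0 * y2 - y0 * x2) * (x1 * y2 - y1 * x2)) =
    x1 * x2 * (x1 * y2 - y1 * x2) * (A * x0 ^+ 2 + B * x0 * y0 + Cc * y0 ^+ 2)
    - x0 * x2 * (x0 * y2 - y0 * x2) * (A * x1 ^+ 2 + B * x1 * y1 + Cc * y1 ^+ 2)
    + x0 * x1 * (x0 * y1 - y0 * x1) * (A * x2 ^+ 2 + B * x2 * y2 + Cc * y2 ^+ 2) by ring.
  by rewrite E0 E1 E2; ring.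
Qed.

Lemma mob_fix3 n x0 x1 x2 : mdet n != 0 -> x0 != x1 -> x0 != x2 -> x1 != x2 ->
  mf n x0 = x0 -> mf n x1 = x1 -> mf n x2 = x2 -> forall x, mf n x = x.
Proof.
move=> hd h01 h02 h12 f0 f1 f2.
have key : forall v, cross (Mv n v) v = - mc n * v.1 ^+ 2 + (ma n - md n) * v.1 * v.2 + mb n * v.2 ^+ 2.
  by move=> v; rewrite /cross /Mv /=; ring.
have [hc hb ha] : [/\ (- mc n) = 0, ma n - md n = 0 & mb n = 0].
  by apply: (Q3 (lift_cross h01) (lift_cross h02) (lift_cross h12));
    rewrite -key; exact: mf_fixed_cross.
move=> x; rewrite mf_pt; apply: pt_eq_lift; first by rewrite Mv_nz ?lift_nz.
have hc' : mc n = 0 by rewrite -[mc n]opprK hc oppr0.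
have ha' : ma n = md n by apply/eqP; rewrite -subr_eq0 hb.
rewrite /cross /Mv /= hc' ha' ha; ring.
Qed.


Lemma aut_mob p q g : is_aut p q g -> exists2 m, mdet m != 0 & g =1 mf m.
Proof. by case=> /is_mobiusP. Qed.

Lemma aut_of p q m : mdet m != 0 ->
  (forall x, mf m (ratmap p q x) = ratmap p q (mf m x)) -> is_aut p q (mf m).
Proof. by move=> hd hc; split => //; apply/is_mobiusP; exists m. Qed.

Lemma aut_of_fun p q g m : mdet m != 0 -> g =1 mf m ->
  (forall x, g (ratmap p q x) = ratmap p q (g x)) -> is_aut p q g.
Proof. by move=> hd hg hc; split => //; apply/is_mobiusP; exists m. Qed.

Lemma comm_inv n (f f1 : sph -> sph) : mdet n != 0 ->
  (forall x, mf n (f x) = f1 (mf n x)) -> forall y, mf (madj n) (f1 y) = f (mf (madj n) y).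
Proof.
move=> hd hc y; rewrite -{1}(mf_Kadj y hd) -hc mf_adjK //.
Qed.

Lemma aut_conj n p q p1 q1 g : mdet n != 0 ->
  (forall x, mf n (ratmap p q x) = ratmap p1 q1 (mf n x)) ->
  is_aut p q g -> is_aut p1 q1 (fun y => mf n (g (mf (madj n) y))).
Proof.
move=> hd hc [/is_mobiusP [m hm hg] hcg].
have hda : mdet (madj n) != 0 by rewrite mdet_adj.
have hmn : mdet (mmul m (madj n)) != 0 by rewrite mdet_mul mulf_neq0.
apply: (aut_of_fun (m := mmul n (mmul m (madj n)))).
- by rewrite !mdet_mul mdet_adj !mulf_neq0.
- by move=> y /=; rewrite hg (mf_comp m _ hda) (mf_comp n _ hmn).
move=> y; rewrite (comm_inv hd hc) hcg -hc; congr (mf n _).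
Qed.

Lemma mf_adj2 n x : mf (madj (madj n)) x = mf n x.
Proof. by case: n => a b c d; rewrite /madj /= !opprK. Qed.

Lemma fixed_None p q : is_fixed p q None <-> q`_2 = 0.
Proof. by rewrite /is_fixed /=; case: ifP => /eqP. Qed.

Lemma fixed_Some p q z : is_fixed p q (Some z) <-> q.[z] != 0 /\ p.[z] = z * q.[z].
Proof.
rewrite /is_fixed /=; case: ifP => [/eqP ->|/negbT hq]; first by split=> // -[].
split; first by case=> h; split => //; rewrite -{2}h divfK.
by case=> _ ->; rewrite mulfK.
Qed.

Lemma ratmap_Z p q k x : (size p <= 3)%N -> (size q <= 3)%N -> k != 0 ->
  ratmap (k *: p) (k *: q) x = ratmap p q x.
Proof.
move=> hp hq hk; rewrite !rat_pt ?size_scale //.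
have -> : Fv (k *: p) (k *: q) (lift x) = sc k (Fv p q (lift x)).
  by rewrite /Fv /qf /sc !coefZ /=; congr pair; ring.
by rewrite pt_sc // -(mf_pt hm x).
Qed.

Lemma mkpZ k c0 c1 c2 : k *: mkp c0 c1 c2 = mkp (k * c0) (k * c1) (k * c2).
Proof. by rewrite /mkp !scalerDr !scalerA scale_polyC. Qed.

Lemma good_p2 p q : good p q -> q`_2 = 0 -> p`_2 != 0.
Proof.
move=> hg hq2; have := good_Fv hg (u := (1, 0)); rewrite Fv_10 /nz /= oner_neq0 /= => /(_ isT).
by rewrite hq2 eqxx orbF.
Qed.

Lemma mult_0 p q : good p q -> p`_0 = 0 -> q`_0 != 0 -> multiplier p q (Some 0) = p`_1 / q`_0.
Proof.
case=> hp hq _ hp0 hq0; rewrite /= /ratderiv hornerD hornerN !hornerM !deriv3 // !horner3 //.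
rewrite hp0; field; exact: hq0.
Qed.

Lemma mult_inf p q : good p q -> q`_2 = 0 -> multiplier p q None = q`_1 / p`_2.
Proof.
move=> hg hq2; have hp2 := good_p2 hg hq2.
rewrite /= /ratderiv /rev2 hornerD hornerN !hornerM.
rewrite -[_%:P + _ *: 'X + _ *: 'X^2]/(mkp _ _ _) !deriv_mkp !horner_mkp.
rewrite hq2; field; exact: hp2.
Qed.

Lemma horner1_3 (r : {poly C}) : (size r <= 3)%N -> r.[1] = r`_0 + r`_1 + r`_2.
Proof. by move=> h; rewrite horner3 //; ring. Qed.

Lemma norm3_facts p q : good p q -> is_fixed p q (Some 0) -> is_fixed p q None ->
  is_fixed p q (Some 1) ->
  [/\ q`_2 = 0, p`_0 = 0, q`_0 != 0, p`_1 + p`_2 = q`_0 + q`_1 & p`_2 != q`_1].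
Proof.
move=> hg /fixed_Some [h0q h0p] /fixed_None hq2 /fixed_Some [h1q h1p].
have [hp hq _] := hg.
rewrite !horner_coef0 mul0r in h0q h0p.
rewrite !horner1_3 // mul1r hq2 h0p in h1p.
have e1 : p`_1 + p`_2 = q`_0 + q`_1 by move: h1p; rewrite add0r addr0.
have hp2 := good_p2 hg hq2.
split => //.
apply/negP => /eqP e.
have e' : p`_1 = q`_0.
  by apply: (addIr (q`_1)); rewrite -{1}e e1.
have := good_Fv hg (u := (- q`_0, q`_1)); rewrite /nz /= -e hp2 orbT => /(_ isT).
rewrite /Fv /qf /= h0p hq2 e'; rewrite -e.
have -> : 0 * p`_2 ^+ 2 + q`_0 * - q`_0 * p`_2 + p`_2 * (- q`_0) ^+ 2 = 0 by ring.
have -> : q`_0 * p`_2 ^+ 2 + p`_2 * - q`_0 * p`_2 + 0 * (- q`_0) ^+ 2 = 0 by ring.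
by rewrite eqxx.
Qed.


Lemma U0 p q p' q' : good p q -> good p' q' ->
  is_fixed p q (Some 0) -> is_fixed p q None -> is_fixed p q (Some 1) ->
  is_fixed p' q' (Some 0) -> is_fixed p' q' None -> is_fixed p' q' (Some 1) ->
  multiplier p q (Some 0) = multiplier p' q' (Some 0) ->
  multiplier p q None = multiplier p' q' None ->
  forall x, ratmap p q x = ratmap p' q' x.
Proof.
move=> hg hg' f0 fi f1 f0' fi' f1' e0 ei.
have [hq2 hp0 hq0 e1 hpq] := norm3_facts hg f0 fi f1.
have [hq2' hp0' hq0' e1' hpq'] := norm3_facts hg' f0' fi' f1'.
have hp2 := good_p2 hg hq2; have hp2' := good_p2 hg' hq2'.
rewrite (mult_0 hg hp0 hq0) (mult_0 hg' hp0' hq0') in e0.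
rewrite (mult_inf hg hq2) (mult_inf hg' hq2') in ei.
set k := q'`_0 / q`_0.
have hk : k != 0 by rewrite mulf_neq0 // invr_eq0.
have [hp hq _] := hg; have [hp' hq' _] := hg'.
set r := q`_1 / p`_2.
have hq1 : q`_1 = r * p`_2 by rewrite /r divfK.
have hq1' : q'`_1 = r * p'`_2 by rewrite /r ei divfK.
have hr : 1 - r != 0.
  apply/negP; rewrite subr_eq0 => /eqP hr1.
  by move: hpq; rewrite hq1 -hr1 mul1r eqxx.
have ek0 : q'`_0 = k * q`_0 by rewrite /k divfK.
have ek1 : p'`_1 = k * p`_1.
  move/(congr1 (fun t => t * q'`_0)): e0; rewrite divfK // => <-.
  by rewrite /k; field.
have ek2 : p'`_2 = k * p`_2.
  apply: (mulIf hr).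
  have a1 : p`_2 * (1 - r) = q`_0 - p`_1.
    apply/eqP; rewrite -subr_eq0.
    have -> : p`_2 * (1 - r) - (q`_0 - p`_1) = (p`_1 + p`_2 - (q`_0 + q`_1)) + (q`_1 - r * p`_2) by ring.
    by rewrite e1 -hq1 !subrr addr0.
  have a2 : p'`_2 * (1 - r) = q'`_0 - p'`_1.
    apply/eqP; rewrite -subr_eq0.
    have -> : p'`_2 * (1 - r) - (q'`_0 - p'`_1) = (p'`_1 + p'`_2 - (q'`_0 + q'`_1)) + (q'`_1 - r * p'`_2) by ring.
    by rewrite e1' -hq1' !subrr addr0.
  by rewrite a2 -mulrA a1 ek0 ek1 mulrBr.
have ek3 : q'`_1 = k * q`_1 by rewrite hq1' hq1 ek2; ring.
have -> : p' = k *: p.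
  by rewrite (mkp_eta hp') (mkp_eta hp) mkpZ hp0 hp0' mulr0 ek1 ek2.
have -> : q' = k *: q.
  by rewrite (mkp_eta hq') (mkp_eta hq) mkpZ hq2 hq2' mulr0 ek0 ek3.
by move=> x; rewrite ratmap_Z.
Qed.


Lemma U3 p q p' q' x0 x1 x2 : good p q -> good p' q' ->
  x0 != x1 -> x0 != x2 -> x1 != x2 ->
  is_fixed p q x0 -> is_fixed p q x1 -> is_fixed p q x2 ->
  is_fixed p' q' x0 -> is_fixed p' q' x1 -> is_fixed p' q' x2 ->
  multiplier p q x0 = multiplier p' q' x0 ->
  multiplier p q x1 = multiplier p' q' x1 ->
  forall x, ratmap p q x = ratmap p' q' x.
Proof.
move=> hg hg' h01 h02 h12 f0 f1 f2 f0' f1' f2' e0 e1.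
have [hd n0 n1 n2] := N3_spec h01 h02 h12.
set n := N3 _ _ _ in hd n0 n1 n2.
have hc := conj_comm hg hd; have hc' := conj_comm hg' hd.
have hG := conj_good hg hd; have hG' := conj_good hg' hd.
have fx : forall a b (pa qa : {poly C}) y, (forall x, mf n (ratmap pa qa x) = ratmap a b (mf n x)) ->
   is_fixed pa qa y -> is_fixed a b (mf n y).
  by move=> a b pa qa y hcc hy; rewrite /is_fixed -hcc hy.
have := U0 hG hG'.
rewrite -n0 -n1 -n2 => /(_ (fx _ _ _ _ _ hc f0) (fx _ _ _ _ _ hc f1) (fx _ _ _ _ _ hc f2)).
move=> /(_ (fx _ _ _ _ _ hc' f0') (fx _ _ _ _ _ hc' f1') (fx _ _ _ _ _ hc' f2')).
rewrite (cr hg hG hd hc f0) (cr hg' hG' hd hc' f0') (cr hg hG hd hc f1) (cr hg' hG' hd hc' f1').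
move=> /(_ e0 e1) hU x.
by rewrite -(mf_adjK (ratmap p q x) hd) hc hU -hc' mf_adjK.
Qed.


Lemma I3_cases (i : 'I_3) : i = i0 \/ i = i1 \/ i = i2.
Proof.
case: i => [[|[|[|k]]] hk] //.
- by left; apply: val_inj.
- by right; left; apply: val_inj.
- by right; right; apply: val_inj.
Qed.

Lemma aut_fix p q g x : is_aut p q g -> is_fixed p q x -> is_fixed p q (g x).
Proof. by case=> _ hc hx; rewrite /is_fixed -hc hx. Qed.

Lemma aut_id p q : is_aut p q id.
Proof.
apply: (aut_of_fun (m := mid)); first by rewrite mdet_id oner_neq0.
  by move=> x; rewrite mf_id.
by [].
Qed.

Lemma part1_core p q (z : 'I_3 -> sph) : good p q -> injective z ->
  (forall x, is_fixed p q x <-> exists i, x = z i) ->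
  [/\ (forall g, is_aut p q g -> forall i, exists j, g (z i) = z j),
      (forall g g', is_aut p q g -> is_aut p q g' -> (forall i, g (z i) = g' (z i)) -> g = g') &
      (forall s : 'S_3, (exists g, is_aut p q g /\ forall i, g (z i) = z (s i)) <->
         (forall i, multiplier p q (z (s i)) = multiplier p q (z i)))].
Proof.
move=> hg hz hfix.
have hzf : forall i, is_fixed p q (z i) by move=> i; apply/hfix; exists i.
have hne : forall i j, i != j -> z i != z j.
  by move=> i j hij; apply/negP => /eqP /hz /eqP; rewrite (negbTE hij).
have h01 : z i0 != z i1 by apply: hne.
have h02 : z i0 != z i2 by apply: hne.
have h12 : z i1 != z i2 by apply: hne.
have faith : forall g g', is_aut p q g -> is_aut p q g' -> (forall i, g (z i) = g' (z i)) -> g = g'.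
  move=> g g' /aut_mob [m hm hgm] /aut_mob [m' hm' hgm'] he.
  have hdn : mdet (mmul (madj m') m) != 0 by rewrite mdet_mul mdet_adj mulf_neq0.
  have hn : forall i, mf (mmul (madj m') m) (z i) = z i.
    by move=> i; rewrite -mf_comp // -hgm he hgm' mf_adjK.
  have hid := mob_fix3 hdn h01 h02 h12 (hn i0) (hn i1) (hn i2).
  apply: functional_extensionality => x.
  by rewrite hgm hgm' -{1}(mf_Kadj (mf m x) hm') (mf_comp (madj m') _ hm) hid.
split => //.
  by move=> g hga i; apply/hfix; apply: aut_fix.
move=> s; split.
  case=> g [hga hgs] i.
  have [m hm hgm] := aut_mob hga.
  have hcm : forall x, mf m (ratmap p q x) = ratmap p q (mf m x).
    by move=> x; rewrite -!hgm; case: hga.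
  by rewrite -hgs hgm (cr hg hg hm hcm (hzf i)).
move=> hs.
have hs' : forall i j, i != j -> s i != s j.
  by move=> i j hij; apply/negP => /eqP /perm_inj /eqP; rewrite (negbTE hij).
have [hd1 a0 a1 a2] := N3_spec h01 h02 h12.
have [hd2 b0 b1 b2] := N3_spec (hne _ _ (hs' i0 i1 isT)) (hne _ _ (hs' i0 i2 isT))
   (hne _ _ (hs' i1 i2 isT)).
set N1 := N3 _ _ _ in hd1 a0 a1 a2.
set N2 := N3 _ _ _ in hd2 b0 b1 b2.
set gm := mmul (madj N2) N1.
have hdg : mdet gm != 0 by rewrite mdet_mul mdet_adj mulf_neq0.
have hgz : forall i, mf gm (z i) = z (s i).
  move=> i; rewrite -mf_comp //.
  case: (I3_cases i) => [->|[->|->]].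
  - by rewrite a0 -b0 mf_adjK.
  - by rewrite a1 -b1 mf_adjK.
  - by rewrite a2 -b2 mf_adjK.
have hc := conj_comm hg hdg; have hG := conj_good hg hdg.
have hzj : forall j, z j = mf gm (z ((s^-1)%g j)) by move=> j; rewrite hgz permKV.
have fP : forall j, is_fixed (pc gm p q) (qc gm p q) (z j).
  by move=> j; rewrite hzj /is_fixed -hc hzf.
have mP : forall j, multiplier (pc gm p q) (qc gm p q) (z j) = multiplier p q (z j).
  move=> j; rewrite {1}hzj (cr hg hG hdg hc (hzf _)) -hs permKV //.
have hU := U3 hG hg h01 h02 h12 (fP i0) (fP i1) (fP i2) (hzf i0) (hzf i1) (hzf i2) (mP i0) (mP i1).
exists (mf gm); split => //.
apply: aut_of => // x.
by rewrite hc hU.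
Qed.


Lemma abc_b (a b c i : 'I_3) : (a != b) ==> (a != c) ==> (b != c) ==> [|| i == a, i == b | i == c].
Proof.
by case: (I3_cases a) => [->|[->|->]]; case: (I3_cases b) => [->|[->|->]];
  case: (I3_cases c) => [->|[->|->]]; case: (I3_cases i) => [->|[->|->]].
Qed.

Lemma abcP (a b c : 'I_3) : a != b -> a != c -> b != c -> forall i, i = a \/ i = b \/ i = c.
Proof.
move=> hab hac hbc i; have := abc_b a b c i; rewrite hab hac hbc /=.
by case/or3P => /eqP; auto.
Qed.

Definition presS (m : 'I_3 -> C) := [set s : 'S_3 | [forall i, m (s i) == m i]].

Lemma presP (m : 'I_3 -> C) (s : 'S_3) : reflect (forall i, m (s i) = m i) (s \in presS m).
Proof.
rewrite inE; apply: (iffP forallP) => h i; first exact/eqP/h.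
by apply/eqP.
Qed.

Lemma card_pres_all (m : 'I_3 -> C) : m i0 = m i1 -> m i1 = m i2 -> #|presS m| = 6%N.
Proof.
move=> e01 e12.
have -> : presS m = [set: 'S_3].
  apply/setP => s; rewrite in_setT; apply/presP => i.
  have hi : forall j, m j = m i0.
    by move=> j; case: (I3_cases j) => [->|[->|->]]; rewrite ?e01 ?e12.
  by rewrite !hi.
by rewrite cardsT card_Sn.
Qed.

Lemma card_pres_dist (m : 'I_3 -> C) : m i0 <> m i1 -> m i1 <> m i2 -> m i0 <> m i2 ->
  #|presS m| = 1%N.
Proof.
move=> d01 d12 d02.
have minj : injective m.
  move=> i j; case: (I3_cases i) => [->|[->|->]]; case: (I3_cases j) => [->|[->|->]] //;
  move=> h; exfalso; by [apply: d01 | apply: d12 | apply: d02 | apply: d01; rewrite h |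
    apply: d12; rewrite h | apply: d02; rewrite h].
have -> : presS m = [set 1%g].
  apply/setP => s; rewrite in_set1; apply/presP/eqP.
    by move=> h; apply/permP => i; rewrite perm1; apply: minj.
  by move=> -> i; rewrite perm1.
by rewrite cards1.
Qed.

Lemma card_pres_two (m : 'I_3 -> C) (a b c : 'I_3) : a != b -> a != c -> b != c ->
  m a = m b -> m c <> m a -> #|presS m| = 2%N.
Proof.
move=> hab hac hbc eab dca.
have cs := abcP hab hac hbc.
have -> : presS m = [set 1%g; tperm a b].
  apply/setP => s; rewrite in_set2; apply/presP/orP.
    move=> h.
    have hsc : s c = c.
      case: (cs (s c)) => [e|[e|//]]; exfalso; apply: dca; rewrite -(h c) e //.
    have hsa : s a != c by rewrite -hsc (inj_eq perm_inj).
    have hsb : s b != c by rewrite -hsc (inj_eq perm_inj).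
    have sab : s a != s b by rewrite (inj_eq perm_inj).
    case: (cs (s a)) => [ea|[ea|ea]]; last by rewrite ea eqxx in hsa.
      left; apply/eqP/permP => i; rewrite perm1.
      have eb : s b = b.
        case: (cs (s b)) => [e|[e|e]] //; last by rewrite e eqxx in hsb.
        by rewrite e ea eqxx in sab.
      by case: (cs i) => [->|[->|->]].
    right; apply/eqP/permP => i.
    have eb : s b = a.
      case: (cs (s b)) => [e|[e|e]] //; last by rewrite e eqxx in hsb.
      by rewrite e ea eqxx in sab.
    case: (cs i) => [->|[->|->]]; rewrite ?tpermL ?tpermR ?tpermD //; by rewrite eq_sym.
  case=> /eqP -> i; first by rewrite perm1.
  case: (cs i) => [->|[->|->]]; rewrite ?tpermL ?tpermR ?tpermD //; by rewrite eq_sym.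
have hne : (1%g : 'S_3) != tperm a b.
  by apply/negP => /eqP /(congr1 (fun s : 'S_3 => s a)); rewrite perm1 tpermL => /eqP; rewrite (negbTE hab).
by rewrite cards2 hne.
Qed.


Lemma has_card_pres (A : (sph -> sph) -> Prop) (z : 'I_3 -> sph) (m : 'I_3 -> C) :
  injective z ->
  (forall g, A g -> injective g) ->
  (forall g, A g -> forall i, exists j, g (z i) = z j) ->
  (forall g g', A g -> A g' -> (forall i, g (z i) = g' (z i)) -> g = g') ->
  (forall s : 'S_3, (exists g, A g /\ forall i, g (z i) = z (s i)) <-> (forall i, m (s i) = m i)) ->
  has_card A #|presS m|.
Proof.
move=> hz hinj hperm hfaith hS.
have hex : forall s : 'S_3, exists g : sph -> sph,
    s \in presS m -> A g /\ forall i, g (z i) = z (s i).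
  move=> s; case: (boolP (s \in presS m)) => hs.
    by have [g hg] := (hS s).2 (presP _ _ hs); exists g.
  by exists id.
pose G (s : 'S_3) := proj1_sig (constructive_indefinite_description _ (hex s)).
have hG : forall s, s \in presS m -> A (G s) /\ forall i, G s (z i) = z (s i).
  by move=> s; rewrite /G; case: constructive_indefinite_description.
exists (fun k => G (enum_val k)); split.
  move=> k k' e; apply: enum_val_inj; apply/permP => i; apply: hz.
  have [_ h1] := hG _ (enum_valP k); have [_ h2] := hG _ (enum_valP k').
  by rewrite -h1 -h2 e.
move=> g; split; last by case=> k ->; case: (hG _ (enum_valP k)).
move=> hAg.
pose sig (i : 'I_3) := odflt i [pick j | g (z i) == z j].
have hsig : forall i, g (z i) = z (sig i).
  move=> i; rewrite /sig; case: pickP => [j /eqP //|h].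
  by have [j hj] := hperm g hAg i; move: (h j); rewrite hj eqxx.
have sinj : injective sig.
  by move=> i j e; apply: hz; apply: (hinj g hAg); rewrite !hsig e.
pose s := perm sinj.
have hs : s \in presS m.
  apply/presP; apply/(hS s); exists g; split => // i; by rewrite permE hsig.
exists (enum_rank_in hs s); rewrite enum_rankK_in //.
apply: hfaith => //; first by case: (hG _ hs).
by move=> i; have [_ ->] := hG _ hs; rewrite permE hsig.
Qed.


Lemma aut_inj p q g : is_aut p q g -> injective g.
Proof. by move=> /aut_mob [m hm hg] x y; rewrite !hg; apply: mf_inj. Qed.

Lemma part1 p q : isRat2 p q ->
  (forall z : 'I_3 -> sphere R, injective z ->
     (forall x, is_fixed p q x <-> exists i, x = z i) ->
     let m := fun i => multiplier p q (z i) in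
     (forall g, is_aut p q g -> forall i, exists j, g (z i) = z j) /\
     (forall g g', is_aut p q g -> is_aut p q g' ->
        (forall i, g (z i) = g' (z i)) -> g = g') /\
     (forall s : 'S_3,
        (exists g, is_aut p q g /\ forall i, g (z i) = z (s i)) <->
        (forall i, m (s i) = m i)) /\
     ((m i0 <> m i1 /\ m i1 <> m i2 /\ m i0 <> m i2) -> has_card (is_aut p q) 1) /\
     ((m i0 = m i1 \/ m i1 = m i2 \/ m i0 = m i2) -> ~ (m i0 = m i1 /\ m i1 = m i2) ->
        has_card (is_aut p q) 2) /\
     ((m i0 = m i1 /\ m i1 = m i2) -> has_card (is_aut p q) 6)).
Proof.
move=> hf z hz hfix m.
have hg := rat2_good hf.
have [c1 c2 c3] := part1_core hg hz hfix.
have hc : has_card (is_aut p q) #|presS m|.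
  exact: (has_card_pres hz (@aut_inj p q) c1 c2 c3).
do 3 (split => //).
split; first by case=> d01 [d12 d02]; rewrite -(card_pres_dist d01 d12 d02).
split; last by case=> e01 e12; rewrite -(card_pres_all e01 e12).
move=> h3 hn.
case: h3 => [e01|[e12|e02]].
- have d20 : m i2 <> m i0 by move=> e; apply: hn; split => //; rewrite -e01 e.
  by rewrite -(@card_pres_two m i0 i1 i2).
- have d01 : m i0 <> m i1 by move=> e; apply: hn.
  by rewrite -(@card_pres_two m i1 i2 i0) // => e; apply: d01; rewrite -e e12.
- have d10 : m i1 <> m i0 by move=> e; apply: hn; split => //; rewrite -e02 e.
  by rewrite -(@card_pres_two m i0 i2 i1).
Qed.


Lemma good_noboth p q z : good p q -> q.[z] = 0 -> p.[z] != 0.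
Proof.
move=> hg hq; have [hp hq3 _] := hg.
have := good_Fv hg (u := (z, 1)); rewrite /nz /= oner_neq0 orbT => /(_ isT).
by rewrite /Fv /= !qf_z1 // hq eqxx orbF.
Qed.

Lemma fixed_of p q z : good p q -> p.[z] = z * q.[z] -> is_fixed p q (Some z).
Proof.
move=> hg e; apply/fixed_Some; split => //.
apply/negP => /eqP hq; have := good_noboth hg hq; by rewrite e hq mulr0 eqxx.
Qed.

Lemma comm_cross_aut p q m : good p q -> mdet m != 0 ->
  (forall x, mf m (ratmap p q x) = ratmap p q (mf m x)) ->
  forall z, cross (Mv m (Fv p q (z, 1))) (Fv p q (Mv m (z, 1))) = 0.
Proof. by move=> hg hd hc z; apply: (comm_cross hg hg hd hc). Qed.

Lemma part2_norm p q : good p q -> is_fixed p q (Some 0) -> is_fixed p q None ->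
  (forall z, z != 0 -> ~ is_fixed p q (Some z)) ->
  forall g, is_aut p q g -> g = id.
Proof.
move=> hg /fixed_Some [h0q h0p] /fixed_None hq2 hno g hga.
have [hp hq _] := hg.
rewrite !horner_coef0 mul0r in h0q h0p.
have hp2 := good_p2 hg hq2.
have nofix : forall z, z != 0 -> (p`_1 - q`_0) + (p`_2 - q`_1) * z != 0.
  move=> z hz; apply/negP => /eqP e; apply: (hno z hz); apply: fixed_of => //.
  rewrite !horner3 // h0p hq2; apply/eqP; rewrite -subr_eq0; apply/eqP.
  transitivity (z * ((p`_1 - q`_0) + (p`_2 - q`_1) * z)); first ring.
  by rewrite e mulr0.
have dich : (p`_2 = q`_1 /\ p`_1 != q`_0) \/ (p`_2 != q`_1 /\ p`_1 = q`_0).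
  case: (eqVneq p`_2 q`_1) => e2.
    left; split => //; apply/negP => /eqP e1.
    by have := nofix 1 (oner_neq0 _); rewrite e1 e2 !subrr mul0r addr0 eqxx.
  right; split => //.
  have hd : p`_2 - q`_1 != 0 by rewrite subr_eq0.
  case: (eqVneq (p`_1 - q`_0) 0) => [/eqP|h1]; first by rewrite subr_eq0 => /eqP.
  have hz : - (p`_1 - q`_0) / (p`_2 - q`_1) != 0 by rewrite mulf_neq0 ?oppr_eq0 ?invr_eq0.
  have := nofix _ hz; rewrite mulrC divfK // subrr eqxx //.
have hres : p`_1 * q`_1 - p`_2 * q`_0 != 0.
  apply/negP => /eqP e.
  case: (eqVneq q`_1 0) => hq1.
    have : p`_2 * q`_0 = 0.
      by transitivity (- (p`_1 * q`_1 - p`_2 * q`_0)); [rewrite hq1; ring | rewrite e oppr0].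
    by move/eqP; rewrite mulf_eq0 (negbTE hp2) (negbTE h0q).
  have := good_Fv hg (u := (- q`_0, q`_1)); rewrite /nz /= hq1 orbT => /(_ isT).
  rewrite /Fv /qf /= h0p hq2.
  have -> : 0 * q`_1 ^+ 2 + p`_1 * - q`_0 * q`_1 + p`_2 * (- q`_0) ^+ 2 =
    - q`_0 * (p`_1 * q`_1 - p`_2 * q`_0) by ring.
  have -> : q`_0 * q`_1 ^+ 2 + q`_1 * - q`_0 * q`_1 + 0 * (- q`_0) ^+ 2 = 0 by ring.
  by rewrite e mulr0 eqxx.
have [m hm hgm] := aut_mob hga.
have hcm : forall x, mf m (ratmap p q x) = ratmap p q (mf m x).
  by move=> x; rewrite -!hgm; case: hga.
have hcr := comm_cross_aut hg hm hcm.
have fset : forall v, is_fixed p q v -> v = Some 0 \/ v = None.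
  case=> [z|] hv; last by right.
  by left; case: (eqVneq z 0) => [->//|hz]; case: (hno z hz).
have hinj := aut_inj hga.
have f0 : is_fixed p q (Some 0) by apply: fixed_of; rewrite ?horner_coef0 ?h0p ?mul0r.
have fi : is_fixed p q None by apply/fixed_None.
case: (fset _ (aut_fix hga f0)) => g0; case: (fset _ (aut_fix hga fi)) => gi.
- by move: (hinj _ _ (etrans g0 (esym gi))).
- (* fixes both *)
  move: g0 gi; rewrite !hgm /mf /=.
  case: m hm hgm hcm hcr => a b c d /= hm hgm hcm hcr.
  rewrite mulr0 add0r mulr0 add0r.
  case: ifP => // /negbT hd [hb]; case: ifP => // /eqP hc _.
  have hb0 : b = 0 by move/eqP: hb; rewrite mulf_eq0 invr_eq0 (negbTE hd) orbF => /eqP.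
  have := coef5 (e0 := 0) (e1 := 0) (e2 := a * d * (a - d) * (p`_1 * q`_1 - p`_2 * q`_0))
    (e3 := 0) (e4 := 0).
  case.
    move=> z; rewrite -[RHS](hcr z) /cross /Mv /Fv /qf /= hb0 hc h0p hq2; ring.
  move=> _ _ /eqP e2 _ _.
  have ha : a != 0 by move: hm; rewrite /mdet /= hb0 mul0r subr0 mulf_eq0 negb_or => /andP [].
  move: e2; rewrite !mulf_eq0 (negbTE ha) (negbTE hd) (negbTE hres) /= orbF subr_eq0 => /eqP had.
  apply: functional_extensionality => x; rewrite hgm /= -/(mf (Mob a b c d) x) mf_pt.
  apply: pt_eq_lift; first by rewrite Mv_nz ?lift_nz.
  by rewrite /cross /Mv /= hb0 hc had; ring.
- (* swaps *)
  move: g0 gi; rewrite !hgm /mf /=.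
  case: m hm hgm hcm hcr => a b c d /= hm hgm hcm hcr.
  rewrite mulr0 add0r.
  case: ifP => // /eqP hd _; case: ifP => // /negbT hc [ha].
  have ha0 : a = 0 by move/eqP: ha; rewrite mulf_eq0 invr_eq0 (negbTE hc) orbF => /eqP.
  have := coef5 (e0 := 0) (e1 := b ^+ 2 * c * (q`_0 * q`_1 - p`_1 * p`_2))
    (e2 := b * c * (c * q`_0 ^+ 2 + b * q`_1 ^+ 2 - c * p`_1 ^+ 2 - b * p`_2 ^+ 2))
    (e3 := b * c ^+ 2 * (q`_0 * q`_1 - p`_1 * p`_2)) (e4 := 0).
  case.
    move=> z; rewrite -[RHS](hcr z) /cross /Mv /Fv /qf /= ha0 hd h0p hq2; ring.
  move=> _ /eqP e1 _ _ _.
  have hb : b != 0 by move: hm; rewrite /mdet /= ha0 hd mul0r sub0r oppr_eq0 mulf_eq0 negb_or => /andP [].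
  move: e1; rewrite !mulf_eq0 (negbTE hb) (negbTE hc) /= subr_eq0 => /eqP e.
  exfalso; case: dich => [[e2 e1]|[e2 e1]].
    apply: (negP e1); apply/eqP; apply: (mulIf hp2).
    by rewrite -e e2.
  apply: (negP e2); apply/eqP; apply: (mulfI h0q).
  by rewrite e e1.
- by move: (hinj _ _ (etrans g0 (esym gi))).
Qed.


Lemma quad_root (A B Cc : C) : A != 0 -> exists z, Cc + B * z + A * z ^+ 2 = 0.
Proof.
move=> hA; exists ((- B + sqrtC (B ^+ 2 - 4 * A * Cc)) / (2 * A)).
rewrite (_ : Cc + B * ((- B + sqrtC (B ^+ 2 - 4 * A * Cc)) / (2 * A)) +
    A * ((- B + sqrtC (B ^+ 2 - 4 * A * Cc)) / (2 * A)) ^+ 2 =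
   (sqrtC (B ^+ 2 - 4 * A * Cc) ^+ 2 - (B ^+ 2 - 4 * A * Cc)) / (4 * A)); last first.
  by field.
by rewrite sqrtCK subrr mul0r.
Qed.

Lemma part3_norm p q : good p q -> is_fixed p q None -> (forall z, ~ is_fixed p q (Some z)) ->
  exists h, [/\ is_aut p q h, h <> id, h \o h = id &
     forall g, is_aut p q g <-> g = id \/ g = h].
Proof.
move=> hg /fixed_None hq2 hno.
have [hp hq _] := hg.
have hp2 := good_p2 hg hq2.
have nofix : forall z, p`_0 + (p`_1 - q`_0) * z + (p`_2 - q`_1) * z ^+ 2 != 0.
  move=> z; apply/negP => /eqP e; apply: (hno z); apply: fixed_of => //.
  rewrite !horner3 // hq2; apply/eqP; rewrite -subr_eq0; apply/eqP.
  by transitivity (p`_0 + (p`_1 - q`_0) * z + (p`_2 - q`_1) * z ^+ 2); [ring | rewrite e].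
have e21 : p`_2 = q`_1.
  apply/eqP; rewrite -subr_eq0; apply/negPn/negP => h.
  by have [z hz] := quad_root (p`_1 - q`_0) p`_0 h; move: (nofix z); rewrite hz eqxx.
have e10 : p`_1 = q`_0.
  apply/eqP; rewrite -subr_eq0; apply/negPn/negP => h.
  have := nofix (- p`_0 / (p`_1 - q`_0)).
  rewrite (_ : p`_0 + (p`_1 - q`_0) * (- p`_0 / (p`_1 - q`_0)) + (p`_2 - q`_1) * _ ^+ 2 = 0) ?eqxx //.
  rewrite e21 subrr mul0r addr0; field; exact: h.
have hp0 : p`_0 != 0.
  by move: (nofix 0); rewrite !mulr0 expr0n /= mulr0 !addr0.
have h2 : (2 : C) != 0 by rewrite pnatr_eq0.
pose hm := Mob (- p`_2) (- (2 * p`_1)) 0 p`_2.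
have hdm : mdet hm != 0 by rewrite /mdet /= mulr0 subr0 mulNr oppr_eq0 mulf_neq0.
have hcomm : forall x, mf hm (ratmap p q x) = ratmap p q (mf hm x).
  apply: (comm_vec (k := - p`_2)) => //; first by rewrite oppr_eq0.
  by move=> u; rewrite /Fv /Mv /sc /qf /= hq2 -e21 -e10; congr pair; ring.
have haut : is_aut p q (mf hm) by apply: aut_of.
exists (mf hm); split => //.
- move=> hid.
  have f0 : mf hm (Some 0) = Some 0 by rewrite hid.
  have f1 : mf hm (Some 1) = Some 1 by rewrite hid.
  have c0 := mf_fixed_cross hdm f0.
  have c1 := mf_fixed_cross hdm f1.
  have e0 : - (2 * p`_1) = 0 by rewrite -[RHS]c0 /cross /Mv /=; ring.
  have e1 : - (2 * p`_1) - 2 * p`_2 = 0 by rewrite -[RHS]c1 /cross /Mv /=; ring.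
  have : 2 * p`_2 = 0.
    transitivity ((- (2 * p`_1)) - (- (2 * p`_1) - 2 * p`_2)); first ring.
    by rewrite e1 e0 subrr.
  by move/eqP; rewrite mulf_eq0 (negbTE h2) (negbTE hp2).
- apply: functional_extensionality => x /=; rewrite mf_comp // mf_pt.
  apply: pt_eq_lift; first by rewrite Mv_nz ?lift_nz // mdet_mul mulf_neq0.
  by rewrite /cross /Mv /=; ring.
move=> g; split; last first.
  by case=> ->; [exact: aut_id | exact: haut].
move=> hga; have [m hmd hgm] := aut_mob hga.
have hcm : forall x, mf m (ratmap p q x) = ratmap p q (mf m x).
  by move=> x; rewrite -!hgm; case: hga.
have hcr := comm_cross_aut hg hmd hcm.
have gi : g None = None.
  have := aut_fix hga (x := None) (proj2 (fixed_None p q) hq2).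
  by case: (g None) => // z /hno.
move: gi; rewrite hgm /mf /=.
case: m hmd hgm hcm hcr => a b c d hmd hgm hcm hcr.
have hmd' := hmd; rewrite /mdet /= in hmd.
case: ifP => // /eqP hc _; simpl in hc.
have hd : d != 0 by move: hmd; rewrite /mdet /= hc mulr0 subr0 mulf_eq0 negb_or => /andP [].
have ha : a != 0 by move: hmd; rewrite /mdet /= hc mulr0 subr0 mulf_eq0 negb_or => /andP [].
have := coef5 (e0 := d * p`_0 * (a * b * p`_2 + a * d * p`_1 - d ^+ 2 * p`_1))
  (e1 := d * p`_0 * p`_2 * (a ^+ 2 - d ^+ 2)) (e2 := 0) (e3 := 0) (e4 := 0).
case.
  move=> z; rewrite -[RHS](hcr z) /cross /Mv /Fv /qf /= hc hq2 -e21 -e10; ring.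
move=> /eqP E0 /eqP E1 _ _ _.
move: E1; rewrite !mulf_eq0 (negbTE hd) (negbTE hp0) (negbTE hp2) /=.
have -> : a ^+ 2 - d ^+ 2 = (a - d) * (a + d) by ring.
rewrite mulf_eq0 subr_eq0 addr_eq0 => /orP [/eqP had|/eqP had].
  left; apply: functional_extensionality => x; rewrite hgm /= -/(mf (Mob a b c d) x) mf_pt.
  rewrite had !mulf_eq0 (negbTE hd) (negbTE hp0) /= in E0.
  have ee : d * b * p`_2 + d * d * p`_1 - d ^+ 2 * p`_1 = d * b * p`_2 by ring.
  rewrite ee !mulf_eq0 (negbTE hd) (negbTE hp2) orbF /= in E0.
  have hb0 := eqP E0.
  apply: pt_eq_lift; first exact: Mv_nz hmd' (lift_nz x).
  by rewrite /cross /Mv /= hb0 hc had; ring.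
right; apply: functional_extensionality => x; rewrite hgm /= -/(mf (Mob a b c d) x) !mf_pt.
rewrite had !mulf_eq0 (negbTE hd) (negbTE hp0) /= in E0.
have ee : - d * b * p`_2 + - d * d * p`_1 - d ^+ 2 * p`_1 = - d * (b * p`_2 + 2 * d * p`_1) by ring.
rewrite ee mulf_eq0 oppr_eq0 (negbTE hd) /= addr_eq0 in E0.
have hb := eqP E0.
have -> : Mv (Mob a b c d) (lift x) = sc (d / p`_2) (Mv hm (lift x)).
  rewrite /Mv /sc /= had hc.
  have hb' : b = - (2 * d * p`_1) / p`_2 by rewrite -hb mulfK.
  by rewrite hb'; congr pair; field.
have hdp : d / p`_2 != 0 by rewrite mulf_neq0 // invr_eq0.
by rewrite pt_sc // -(mf_pt hm x).
Qed.


Lemma fixed_conj_iff n p q P Q : mdet n != 0 ->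
  (forall x, mf n (ratmap p q x) = ratmap P Q (mf n x)) ->
  forall v, is_fixed P Q v <-> is_fixed p q (mf (madj n) v).
Proof.
move=> hd hc v; rewrite /is_fixed; split => h.
  by rewrite -(comm_inv hd hc) h.
by rewrite -{1}(mf_Kadj v hd) -hc h mf_Kadj.
Qed.

Lemma aut_back n p q P Q g : mdet n != 0 ->
  (forall x, mf n (ratmap p q x) = ratmap P Q (mf n x)) ->
  is_aut P Q g -> is_aut p q (fun y => mf (madj n) (g (mf n y))).
Proof.
move=> hd hc hga.
have hda : mdet (madj n) != 0 by rewrite mdet_adj.
have := aut_conj hda (comm_inv hd hc) hga.
have -> : (fun y => mf (madj n) (g (mf (madj (madj n)) y))) = (fun y => mf (madj n) (g (mf n y))).
  by apply: functional_extensionality => y; rewrite mf_adj2.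
by [].
Qed.

Lemma conj_back_eq n (g : sph -> sph) y : mdet n != 0 ->
  g y = mf (madj n) ((fun v => mf n (g (mf (madj n) v))) (mf n y)).
Proof. by move=> hd /=; rewrite !mf_adjK. Qed.

Lemma part2 p q : isRat2 p q -> num_fixed p q 2 -> forall g, is_aut p q g <-> g = id.
Proof.
move=> hf [s [hu [hs hfix]]] g.
have hg := rat2_good hf.
case: s hu hs hfix => [|x [|y [|]]] // hu _ hfix.
have hxy : x != y by move: hu; rewrite /= inE andbT.
have [hd n0 n1] := N2_spec hxy.
set n := N2 _ _ in hd n0 n1.
have hc := conj_comm hg hd; have hG := conj_good hg hd.
have hfc := fixed_conj_iff hd hc.
have hx : mf (madj n) (Some 0) = x by rewrite -n0 mf_adjK.
have hy : mf (madj n) None = y by rewrite -n1 mf_adjK.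
have f0 : is_fixed (pc n p q) (qc n p q) (Some 0) by apply/hfc; rewrite hx; apply/hfix; rewrite inE eqxx.
have fi : is_fixed (pc n p q) (qc n p q) None by apply/hfc; rewrite hy; apply/hfix; rewrite !inE eqxx orbT.
have nf : forall z, z != 0 -> ~ is_fixed (pc n p q) (qc n p q) (Some z).
  move=> z hz /hfc /hfix; rewrite !inE => /orP [] /eqP e.
    by move: (congr1 (mf n) e); rewrite mf_Kadj // n0 => -[] /eqP; rewrite (negbTE hz).
  by move: (congr1 (mf n) e); rewrite mf_Kadj // n1.
have hn := part2_norm hG f0 fi nf.
split; last by move=> ->; exact: aut_id.
move=> hga; have := hn _ (aut_conj hd hc hga) => e.
apply: functional_extensionality => v.
have E := congr1 (fun f => f (mf n v)) e; simpl in E.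
by rewrite mf_adjK // in E; apply: (mf_inj hd).
Qed.

Lemma part3 p q : isRat2 p q -> num_fixed p q 1 ->
  exists h, is_aut p q h /\ h <> id /\ h \o h = id /\
       forall g, is_aut p q g <-> g = id \/ g = h.
Proof.
move=> hf [s [hu [hs hfix]]].
have hg := rat2_good hf.
case: s hu hs hfix => [|x [|]] // hu _ hfix.
pose w : sph := if x == None then Some 0 else None.
have hwx : w != x.
  rewrite /w; case: (eqVneq x None) => [-> //|hx].
  by rewrite eq_sym.
have [hd n0 n1] := N2_spec hwx.
set n := N2 _ _ in hd n0 n1.
have hc := conj_comm hg hd; have hG := conj_good hg hd.
have hfc := fixed_conj_iff hd hc.
have hx : mf (madj n) None = x by rewrite -n1 mf_adjK.
have fi : is_fixed (pc n p q) (qc n p q) None by apply/hfc; rewrite hx; apply/hfix; rewrite inE eqxx.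
have nf : forall z, ~ is_fixed (pc n p q) (qc n p q) (Some z).
  move=> z /hfc /hfix; rewrite !inE => /eqP e.
  by move: (congr1 (mf n) e); rewrite mf_Kadj // n1.
have [h [ha hne hhh hall]] := part3_norm hG fi nf.
have hda : mdet (madj n) != 0 by rewrite mdet_adj.
exists (fun y => mf (madj n) (h (mf n y))); split; first exact: aut_back hd hc ha.
split.
  move=> e; apply: hne; apply: functional_extensionality => v.
  apply: (mf_inj hda).
  have := congr1 (fun f => f (mf (madj n) v)) e; rewrite /= mf_Kadj // => ->.
split.
  apply: functional_extensionality => y /=.
  rewrite mf_Kadj //.
  have := congr1 (fun f => f (mf n y)) hhh; rewrite /= => ->.
  by rewrite mf_adjK.
move=> g; split; last first.
  by case=> ->; [exact: aut_id | exact: aut_back hd hc ha].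
move=> hga; have := (hall _).1 (aut_conj hd hc hga) => -[e|e].
  left; apply: functional_extensionality => v.
  have E := congr1 (fun f => f (mf n v)) e; simpl in E.
  by rewrite mf_adjK // in E; apply: (mf_inj hd).
right; apply: functional_extensionality => v.
have E := congr1 (fun f => f (mf n v)) e; simpl in E.
by rewrite mf_adjK // in E; rewrite -E mf_adjK.
Qed.

End Base.

Unset Implicit Arguments.

Theorem mainTheorem8 (R : realType) (p q : {poly R[i]}) (hf : isRat2 p q) :
  (* (1) three distinct fixed points z 0, z 1, z 2 *)
  (forall z : 'I_3 -> sphere R, injective z ->
     (forall x, is_fixed p q x <-> exists i, x = z i) ->
     let m := fun i => multiplier p q (z i) in
     (* Aut(f) acts on the fixed point set ... *)
     (forall g, is_aut p q g -> forall i, exists j, g (z i) = z j) /\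
     (* ... faithfully ... *)
     (forall g g', is_aut p q g -> is_aut p q g' ->
        (forall i, g (z i) = g' (z i)) -> g = g') /\
     (* ... and is exactly the group of multiplier-preserving permutations *)
     (forall s : 'S_3,
        (exists g, is_aut p q g /\ forall i, g (z i) = z (s i)) <->
        (forall i, m (s i) = m i)) /\
     (* hence the order of Aut(f) *)
     ((m i0 <> m i1 /\ m i1 <> m i2 /\ m i0 <> m i2) -> has_card (is_aut p q) 1) /\
     ((m i0 = m i1 \/ m i1 = m i2 \/ m i0 = m i2) -> ~ (m i0 = m i1 /\ m i1 = m i2) ->
        has_card (is_aut p q) 2) /\
     ((m i0 = m i1 /\ m i1 = m i2) -> has_card (is_aut p q) 6)) /\
  (* (2) exactly two distinct fixed points: Aut(f) trivial *)
  (num_fixed p q 2 -> forall g, is_aut p q g <-> g = id) /\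
  (* (3) exactly one fixed point: Aut(f) cyclic of order two *)
  (num_fixed p q 1 ->
     exists h, is_aut p q h /\ h <> id /\ h \o h = id /\
       forall g, is_aut p q g <-> g = id \/ g = h).
Proof.
split; first exact: part1.
split; first exact: part2.
exact: part3.
Qed.
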